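(* Let $G'=(V',E')$ be a subgraph of a graph $G=(V,E)$, let $\alpha$ and $\beta$ be two $k$-colorings of $G$, and let $\alpha'=\alpha|_{V'}$ and $\beta'=\beta|_{V'}$. Let $T'\subseteq V'$ and $T\subseteq V$. If the $\alpha'$-node and the $\beta'$-node of $\mathcal{C}^c_k(G',T')$ lie in different components, then the $\alpha$-node and the $\beta$-node of $\mathcal{C}^c_k(G,T)$ lie in different components.
   Context: A $k$-coloring of $G$ is a map $\alpha:V(G)\to\{1,\dots,k\}$ with $\alpha(u)\ne\alpha(v)$ for every edge $uv$. $\mathcal{C}_k(G)$ has the $k$-colorings as nodes, adjacent iff they differ on exactly one vertex. For $T\subseteq V(G)$, label each coloring $\gamma$ by $\gamma|_T$. A label component is a maximal set of colorings with the same label inducing a connected subgraph of $\mathcal{C}_k(G)$. The contracted solution graph $\mathcal{C}^c_k(G,T)=(H,\ell)$ has one node $x$ per label component $S_x$, distinct $x,y$ adjacent iff some $\gamma\in S_x,\gamma'\in S_y$ are adjacent in $\mathcal{C}_k(G)$, and $\ell(x)$ the common label on $S_x$. A certificate is an assignment of nonempty sets $S_x$ of $k$-colorings of $G$ to the nodes $x$ of $H$ such that: the $S_x$ partition the $k$-colorings; $\gamma|_T=\ell(x)$ for $\gamma\in S_x$; adjacent nodes have distinct labels; each $S_x$ induces a connected subgraph of $\mathcal{C}_k(G)$; distinct $x,y$ are adjacent iff some $\gamma\in S_x$ and $\gamma'\in S_y$ are adjacent in $\mathcal{C}_k(G)$. For a fixed certificate, the $\gamma$-node is the node $x$ with $\gamma\in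 S_x$; when several $\gamma$-nodes in one graph are considered they are taken with respect to the same certificate. *)

(* Defs.v *)
From mathcomp Require Import all_boot.
Set Implicit Arguments. Unset Strict Implicit. Unset Printing Implicit Defensive.

Section Recol.
Variables (V : finType) (e : rel V) (k : nat).

Definition simple_graph : Prop := symmetric e /\ irreflexive e.

Definition is_coloring (c : {ffun V -> 'I_k}) : bool :=
  [forall u, forall v, e u v ==> (c u != c v)].

Definition recol_adj (c d : {ffun V -> 'I_k}) : bool :=
  [&& is_coloring c, is_coloring d & #|[set v | c v != d v]| == 1].

Variable T : {set V}.

Definition same_label (c d : {ffun V -> 'I_k}) : bool :=
  [forall v in T, c v == d v].

Definition induces_connected (S : {set {ffun V -> 'I_k}}) : bool :=
  [forall c in S, forall d in S,
     connect [rel a b | [&& recol_adj a b, a \in S & b \in S]] c d].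

Definition same_label_conn_set (S : {set {ffun V -> 'I_k}}) : bool :=
  [&& S != set0, [forall c in S, is_coloring c],
      [forall c in S, forall d in S, same_label c d] & induces_connected S].

Definition label_component (S : {set {ffun V -> 'I_k}}) : bool :=
  same_label_conn_set S &&
  [forall S' : {set {ffun V -> 'I_k}},
     ((S \subset S') && same_label_conn_set S') ==> (S' == S)].

(* adjacency of nodes (label components) of the contracted solution graph *)
Definition contracted_adj (S S' : {set {ffun V -> 'I_k}}) : bool :=
  [&& label_component S, label_component S', S != S' &
      [exists c in S, exists d in S', recol_adj c d]].

Definition contracted_same_component (S S' : {set {ffun V -> 'I_k}}) : bool :=
  connect contracted_adj S S'.

End Recol.

Definition restrict (V : finType) (V' : {set V}) (k : nat)
  (c : {ffun V -> 'I_k}) : {ffun {x : V | x \in V'} -> 'I_k} :=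
  [ffun x => c (val x)].

(* Main.v *)
Require Import Defs.
From mathcomp Require Import all_boot.
Set Implicit Arguments. Unset Strict Implicit. Unset Printing Implicit Defensive.

Lemma connect_map (A B : finType) (r : rel A) (s : rel B) (f : A -> B) :
  (forall a b, r a b -> connect s (f a) (f b)) ->
  forall a b, connect r a b -> connect s (f a) (f b).
Proof.
move=> H a b /connectP [p]; elim: p a => [|c p IH] a /=; first by move=> _ ->.
by move=> /andP[hac hp] hb; apply: connect_trans (H _ _ hac) (IH _ hp hb).
Qed.

Section Gen.
Variables (V : finType) (e : rel V) (k : nat) (T : {set V}).
Notation col := {ffun V -> 'I_k}.

Lemma same_label_trans (a b c : col) : same_label T a b -> same_label T b c -> same_label T a c.
Proof.
move=> /forall_inP H1 /forall_inP H2; apply/forall_inP=> v vT.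
by rewrite (eqP (H1 v vT)) (H2 v vT).
Qed.

Lemma same_label_sym (a b : col) : same_label T a b -> same_label T b a.
Proof. by move=> /forall_inP H; apply/forall_inP=> v vT; rewrite eq_sym H. Qed.

Lemma conn_mono (S S' : {set col}) (a b : col) : S \subset S' ->
  connect [rel x y | [&& recol_adj e x y, x \in S & y \in S]] a b ->
  connect [rel x y | [&& recol_adj e x y, x \in S' & y \in S']] a b.
Proof.
move=> sub; apply: connect_sub => x y /= /and3P[h hx hy]; apply: connect1.
by rewrite /= h !(subsetP sub).
Qed.

Lemma conn_recol (S : {set col}) (a b : col) :
  connect [rel x y | [&& recol_adj e x y, x \in S & y \in S]] a b ->
  connect (@recol_adj V e k) a b.
Proof.
by apply: connect_sub => x y /= /and3P[h _ _]; apply: connect1.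
Qed.

Lemma comp_exists (c : col) : is_coloring e c ->
  exists S, label_component e T S && (c \in S).
Proof.
move=> hc.
pose P := fun S : {set col} => (c \in S) && same_label_conn_set e T S.
have P0 : P [set c].
  rewrite /P set11 /same_label_conn_set. rewrite /=.
  apply/and4P; split.
  - by apply/set0Pn; exists c; rewrite set11.
  - by apply/forall_inP=> x /set1P ->.
  - apply/forall_inP=> x /set1P ->; apply/forall_inP=> y /set1P ->.
    by apply/forall_inP.
  - by apply/forall_inP=> x /set1P ->; apply/forall_inP=> y /set1P ->.
case: (arg_maxnP (fun S : {set col} => #|S|) P0) => S /andP[cS hS] Hmax.
exists S; rewrite cS andbT /label_component hS /=.
apply/forallP=> S'; apply/implyP=> /andP[sub hS'].
have := Hmax S'; rewrite /P (subsetP sub _ cS) hS' => /(_ isT) le.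
rewrite eq_sym; have := subset_leqif_cards sub.
by move=> [_ <-]; rewrite eqn_leq subset_leq_card //=; exact: le.
Qed.

Lemma comp_unique (S1 S2 : {set col}) (c : col) :
  label_component e T S1 -> label_component e T S2 -> c \in S1 -> c \in S2 -> S1 = S2.
Proof.
move=> /andP[h1 m1] /andP[h2 m2] c1 c2.
move: (h1) (h2) => /and4P[_ col1 lab1 con1] /and4P[_ col2 lab2 con2].
have sU1 : S1 \subset S1 :|: S2 by apply: subsetUl.
have sU2 : S2 \subset S1 :|: S2 by apply: subsetUr.
have hU : same_label_conn_set e T (S1 :|: S2).
  apply/and4P; split.
  - by apply/set0Pn; exists c; rewrite inE c1.
  - apply/forall_inP=> x /setUP[] hx; [exact: (forall_inP col1) | exact: (forall_inP col2)].
  - have L1 x y : x \in S1 -> y \in S1 -> same_label T x y.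
      by move=> hx hy; exact: (forall_inP (forall_inP lab1 x hx)).
    have L2 x y : x \in S2 -> y \in S2 -> same_label T x y.
      by move=> hx hy; exact: (forall_inP (forall_inP lab2 x hx)).
    apply/forall_inP=> x /setUP[] hx; apply/forall_inP=> y /setUP[] hy.
    + exact: L1.
    + exact: same_label_trans (L1 _ _ hx c1) (L2 _ _ c2 hy).
    + exact: same_label_trans (L2 _ _ hx c2) (L1 _ _ c1 hy).
    + exact: L2.
  - have C1 x y : x \in S1 -> y \in S1 ->
        connect [rel a b | [&& recol_adj e a b, a \in S1 :|: S2 & b \in S1 :|: S2]] x y.
      by move=> hx hy; apply: conn_mono sU1 _; exact: (forall_inP (forall_inP con1 x hx)).
    have C2 x y : x \in S2 -> y \in S2 ->
        connect [rel a b | [&& recol_adj e a b, a \in S1 :|: S2 & b \in S1 :|: S2]] x y.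
      by move=> hx hy; apply: conn_mono sU2 _; exact: (forall_inP (forall_inP con2 x hx)).
    apply/forall_inP=> x /setUP[] hx; apply/forall_inP=> y /setUP[] hy.
    + exact: C1.
    + exact: connect_trans (C1 _ _ hx c1) (C2 _ _ c2 hy).
    + exact: connect_trans (C2 _ _ hx c2) (C1 _ _ c1 hy).
    + exact: C2.
have e1 := implyP (forallP m1 (S1 :|: S2)); rewrite sU1 hU in e1.
have e2 := implyP (forallP m2 (S1 :|: S2)); rewrite sU2 hU in e2.
by rewrite -[LHS](eqP (e1 isT)) -[RHS](eqP (e2 isT)).
Qed.

Lemma recol_to_contracted (c d : col) (S S' : {set col}) :
  connect (@recol_adj V e k) c d -> label_component e T S -> c \in S ->
  label_component e T S' -> d \in S' -> connect (@contracted_adj V e k T) S S'.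
Proof.
move=> /connectP [p]; elim: p c S => [|c1 p IH] c S /=.
  by move=> _ -> hS cS hS' cS'; rewrite (comp_unique hS hS' cS cS') connect0.
move=> /andP[hcc1 hp] hd hS cS hS' dS'.
have col1 : is_coloring e c1 by case/and3P: hcc1.
case: (comp_exists col1) => S1 /andP[hS1 c1S1].
apply: connect_trans (IH _ _ hp hd hS1 c1S1 hS' dS').
have [-> | neq] := eqVneq S S1; first exact: connect0.
apply: connect1; rewrite /contracted_adj hS hS1 neq /=.
by apply/exists_inP; exists c => //; apply/exists_inP; exists c1.
Qed.

Lemma contracted_to_recol (S S' : {set col}) (c d : col) :
  connect (@contracted_adj V e k T) S S' -> c \in S -> d \in S' ->
  label_component e T S' -> connect (@recol_adj V e k) c d.
Proof.
move=> /connectP [p]; elim: p S c => [|S1 p IH] S c /=.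
  move=> _ -> cS dS /andP[/and4P[_ _ _ con] _].
  exact: conn_recol (forall_inP (forall_inP con c cS) d dS).
move=> /andP[hSS1 hp] hl cS dS' hS'.
case/and4P: hSS1 => /andP[/and4P[_ _ _ con] _] _ _ /exists_inP[a aS /exists_inP[b bS1 hab]].
apply: connect_trans (conn_recol (forall_inP (forall_inP con c cS) a aS)) _.
apply: connect_trans (connect1 hab) _.
exact: IH bS1 dS' hS'.
Qed.

End Gen.

Lemma restrict_step (V : finType) (e : rel V) (V' : {set V}) (e' : rel {x : V | x \in V'})
  (k : nat) (c d : {ffun V -> 'I_k}) :
  (forall x y : {x : V | x \in V'}, e' x y -> e (val x) (val y)) ->
  recol_adj e c d -> connect (@recol_adj _ e' k) (restrict V' c) (restrict V' d).
Proof.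
move=> He /and3P[hc hd hcard].
have colr (f : {ffun V -> 'I_k}) : is_coloring e f -> is_coloring e' (restrict V' f).
  move=> /forallP hf; apply/forallP=> u; apply/forallP=> v; apply/implyP=> huv.
  rewrite !ffunE; exact: (implyP (forallP (hf (val u)) (val v)) (He _ _ huv)).
set D' := [set v | restrict V' c v != restrict V' d v].
have le1 : #|D'| <= 1.
  rewrite -(card_imset _ val_inj) -(eqP hcard); apply: subset_leq_card.
  apply/subsetP=> x /imsetP[y]; rewrite !inE !ffunE => hy ->; exact: hy.
move: le1; rewrite leq_eqVlt ltnS leqn0 => /orP[h1|h0].
  by apply: connect1; rewrite /recol_adj !colr // h1.
suff -> : restrict V' c = restrict V' d by apply: connect0.
apply/ffunP=> x; apply/eqP; apply/negPn/negP=> hx.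
have : x \in D' by rewrite inE.
by rewrite (cards0_eq (eqP h0)) inE.
Qed.

Theorem proposition9
  (V : finType) (e : rel V) (V' : {set V}) (e' : rel {x : V | x \in V'})
  (k : nat) (alpha beta : {ffun V -> 'I_k})
  (T' : {set {x : V | x \in V'}}) (T : {set V}) :
  simple_graph e -> simple_graph e' ->
  (forall x y : {x : V | x \in V'}, e' x y -> e (val x) (val y)) ->
  is_coloring e alpha -> is_coloring e beta ->
  forall (Na' Nb' : {set {ffun {x : V | x \in V'} -> 'I_k}})
         (Na Nb : {set {ffun V -> 'I_k}}),
  label_component e' T' Na' -> restrict V' alpha \in Na' ->
  label_component e' T' Nb' -> restrict V' beta \in Nb' ->
  label_component e T Na -> alpha \in Na ->
  label_component e T Nb -> beta \in Nb ->
  ~~ contracted_same_component e' T' Na' Nb' ->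
  ~~ contracted_same_component e T Na Nb.
Proof.
move=> _ _ He _ _ Na' Nb' Na Nb hNa' aNa' hNb' bNb' hNa aNa hNb bNb hnot.
apply/negP=> hcon; move/negP: hnot; apply.
have h1 := contracted_to_recol hcon aNa bNb hNb.
have h2 := connect_map (fun c d => restrict_step He) h1.
exact: recol_to_contracted h2 hNa' aNa' hNb' bNb'.
Qed.
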